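(* For every positive integer $r$, $$\sum_{n=1}^{\infty}\frac{1}{n(2n+2r-1)4^n}\frac{\binom{4n-2}{2n-1}}{\binom{2n+2r-2}{n+r-1}}=\frac{1}{(2r-1)\binom{2r-2}{r-1}}-\frac{1}{2^{2r-2}}I(r),$$ where $$I(r)=\frac{6\cdot 16^{r-1}}{r\binom{4r}{2r}}\left(\frac{4}{3}-\sqrt{2}\sum_{k=0}^{r-1} \frac{\binom{4k}{2k}}{(6k+3)16^k}\right).$$ *)

(* Defs.v *)
From Stdlib Require Import Reals Lra Lia.
From Coquelicot Require Import Coquelicot.
Open Scope R_scope.

Definition binomR (n k : nat) : R := Binomial.C n k.

Definition term (r n : nat) : R :=
  / (INR n * (2 * INR n + 2 * INR r - 1) * 4 ^ n)
  * (binomR (4 * n - 2) (2 * n - 1) / binomR (2 * n + 2 * r - 2) (n + r - 1)).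

Definition I_r (r : nat) : R :=
  6 * 16 ^ (r - 1) / (INR r * binomR (4 * r) (2 * r)) *
  (4 / 3 - sqrt 2 * sum_f_R0 (fun k => binomR (4 * k) (2 * k) / ((6 * INR k + 3) * 16 ^ k)) (r - 1)).

(* Main.v *)
Require Import Defs.
From Stdlib Require Import Reals Lra Lia.
From Coquelicot Require Import Coquelicot.
Open Scope R_scope.

Lemma lim_inv_S : is_lim_seq (fun k => / (INR k + 1)) 0.
Proof.
  assert (H : is_lim_seq (fun k => INR k + 1) p_infty).
  { apply is_lim_seq_ext with (fun k => INR (S k)).
    - intro k; rewrite S_INR; reflexivity.
    - apply (is_lim_seq_incr_1 INR p_infty), is_lim_seq_INR. }
  apply (is_lim_seq_inv _ _ H). discriminate.
Qed.

Lemma lim_bound (x : nat -> R) (L C : R) :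
  (forall k, Rabs (x k - L) <= C / (INR k + 1)) -> is_lim_seq x L.
Proof.
  intro H.
  assert (H0 : is_lim_seq (fun k => C * / (INR k + 1)) 0).
  { replace 0 with (C * 0) by ring.
    apply (is_lim_seq_scal_l _ C 0), lim_inv_S. }
  apply is_lim_seq_le_le with (fun k => L - C * / (INR k + 1)) (fun k => L + C * / (INR k + 1)).
  - intro k; specialize (H k); unfold Rdiv in H; apply Rabs_le_between in H; lra.
  - replace (Finite L) with (Finite (L - 0)) by (f_equal; ring).
    apply is_lim_seq_minus'; [apply is_lim_seq_const | exact H0].
  - replace (Finite L) with (Finite (L + 0)) by (f_equal; ring).
    apply is_lim_seq_plus'; [apply is_lim_seq_const | exact H0].
Qed.

Lemma telescope (f G : nat -> R) (L : R) :
  (forall k, f k = G k - G (S k)) -> is_lim_seq G L -> is_series f (G O - L).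
Proof.
  intros Hf HG.
  unfold is_series. change (is_lim_seq (sum_n f) (G O - L)).
  assert (E : forall n, sum_n f n = G O - G (S n)).
  { induction n as [|n IH].
    - rewrite sum_O, Hf; reflexivity.
    - rewrite sum_Sn, IH, Hf. unfold plus; simpl. ring. }
  apply is_lim_seq_ext with (fun n => G O - G (S n)).
  - intro n; rewrite E; reflexivity.
  - apply is_lim_seq_minus'; [apply is_lim_seq_const|].
    apply (is_lim_seq_incr_1 G L), HG.
Qed.

Definition w (m : nat) : R := binomR (2*m) m / 4 ^ m.

Lemma binom_S (m : nat) :
  binomR (2 * S m) (S m) = binomR (2*m) m * ((2*INR m+1)*(2*INR m+2)) / ((INR m + 1)*(INR m+1)).
Proof.
  unfold binomR, Binomial.C.
  replace (2 * S m - S m)%nat with (S m) by lia.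
  replace (2 * m - m)%nat with m by lia.
  replace (2 * S m)%nat with (S (S (2*m))) by lia.
  rewrite !fact_simpl, !mult_INR, !S_INR, mult_INR.
  assert (H1 := INR_fact_neq_0 (2*m)). assert (H2 := INR_fact_neq_0 m).
  assert (H3 := pos_INR m). simpl (INR 2).
  field. repeat split; try assumption; lra.
Qed.

Lemma w_S (m : nat) : w (S m) = w m * (2*INR m+1) / (2*INR m+2).
Proof.
  unfold w. rewrite binom_S. simpl (4 ^ S m).
  assert (H3 := pos_INR m). assert (H4 : 4 ^ m <> 0) by (apply pow_nonzero; lra).
  field. repeat split; try assumption; lra.
Qed.

Lemma w_0 : w 0 = 1.
Proof. unfold w, binomR, Binomial.C. simpl. field. Qed.

Lemma w_pos (m : nat) : 0 < w m.
Proof.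
  induction m as [|m IH]. rewrite w_0; lra.
  rewrite w_S. assert (H3 := pos_INR m).
  apply Rdiv_lt_0_compat; [apply Rmult_lt_0_compat|]; lra.
Qed.

Lemma le_div (a b c : R) : 0 < c -> a * c <= b -> a <= b / c.
Proof. intros Hc H. apply Rmult_le_reg_r with c; auto. unfold Rdiv. rewrite Rmult_assoc, Rinv_l; lra. Qed.
Lemma div_le (a b c : R) : 0 < c -> a <= b * c -> a / c <= b.
Proof. intros Hc H. apply Rmult_le_reg_r with c; auto. unfold Rdiv. rewrite Rmult_assoc, Rinv_l; lra. Qed.

Lemma a_step (n : nat) : w n ^ 2 * INR n <= w (S n) ^ 2 * INR (S n).
Proof.
  rewrite w_S, S_INR. assert (H := pos_INR n). assert (Hw := w_pos n).
  replace ((w n * (2 * INR n + 1) / (2 * INR n + 2)) ^ 2 * (INR n + 1))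
    with (w n ^ 2 * ((2 * INR n + 1)^2 / (4 * (INR n + 1)))) by (field; lra).
  apply Rmult_le_compat_l; [nra|]. apply le_div; nra.
Qed.

Lemma b_step (n : nat) : w (S n) ^ 2 * (2 * INR (S n) + 1) <= w n ^ 2 * (2 * INR n + 1).
Proof.
  rewrite w_S, S_INR. assert (H := pos_INR n). assert (Hw := w_pos n).
  replace ((w n * (2 * INR n + 1) / (2 * INR n + 2)) ^ 2 * (2 * (INR n + 1) + 1))
    with (w n ^ 2 * ((2 * INR n + 1)^2 * (2 * INR n + 3) / (4 * (INR n + 1)^2))) by (field; lra).
  apply Rmult_le_compat_l; [nra|]. apply div_le; nra.
Qed.

Lemma a_mono (k j : nat) : w k ^ 2 * INR k <= w (k + j) ^ 2 * INR (k + j).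
Proof.
  induction j as [|j IH]. rewrite Nat.add_0_r; lra.
  replace (k + S j)%nat with (S (k + j)) by lia. eapply Rle_trans; [apply IH|apply a_step].
Qed.

Lemma b_mono (k j : nat) : w (k + j) ^ 2 * (2 * INR (k + j) + 1) <= w k ^ 2 * (2 * INR k + 1).
Proof.
  induction j as [|j IH]. rewrite Nat.add_0_r; lra.
  replace (k + S j)%nat with (S (k + j)) by lia. eapply Rle_trans; [apply b_step|apply IH].
Qed.

Lemma q_bound (k : nat) : Rabs (w (2*k) / w k - sqrt 2 / 2) <= 1 / (INR k + 1).
Proof.
  assert (Hs : sqrt 2 * sqrt 2 = 2) by (apply sqrt_sqrt; lra).
  assert (Hs0 : 0 <= sqrt 2) by apply sqrt_pos.
  assert (Hs1 : 1 < sqrt 2).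
  { rewrite <- sqrt_1. apply sqrt_lt_1; lra. }
  set (s := sqrt 2 / 2).
  assert (Hss : s * s = 1/2) by (unfold s; nra).
  assert (s1 : 1/2 < s) by (unfold s; lra).
  assert (s2 : s < 1) by (unfold s; nra).
  assert (HA := w_pos k). assert (HB := w_pos (2*k)).
  set (x := w (2*k) / w k).
  assert (Ex : w (2*k) = x * w k) by (unfold x; field; lra).
  assert (Hx : 0 < x) by (unfold x; apply Rdiv_lt_0_compat; lra).
  assert (Hk := pos_INR k).
  destruct k as [|k'].
  - unfold x. replace (2*0)%nat with 0%nat by reflexivity. rewrite w_0. simpl INR.
    replace (1/1 - s) with (1 - s) by field. replace (1/(0+1)) with 1 by field.
    rewrite Rabs_pos_eq; lra.
  - set (k := S k') in *.
    assert (Hk1 : 1 <= INR k) by (unfold k; rewrite S_INR; assert (Hk2 := pos_INR k'); lra).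
    assert (HaM := a_mono k k). assert (HbM := b_mono k k).
    replace (k + k)%nat with (2*k)%nat in HaM, HbM by lia.
    rewrite mult_INR in HaM, HbM. simpl (INR 2) in HaM, HbM.
    rewrite Ex in HaM, HbM.
    assert (L1 : 1/2 <= x * x).
    { assert (0 < w k ^ 2 * INR k) by (apply Rmult_lt_0_compat; [apply pow_lt|]; lra).
      nra. }
    assert (L2 : x * x * (4 * INR k + 1) <= 2 * INR k + 1).
    { assert (0 < w k ^ 2) by (apply pow_lt; lra). nra. }
    assert (L3 : s <= x) by nra.
    rewrite Rabs_pos_eq by lra.
    apply le_div; [lra|].
    assert ((x - s) * (x + s) <= 1 / (2 * (4 * INR k + 1))).
    { apply le_div; [lra|]. nra. }
    assert (1 / (2 * (4 * INR k + 1)) * (INR k + 1) <= 1).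
    { replace (1 / (2 * (4 * INR k + 1)) * (INR k + 1)) with ((INR k + 1) / (2 * (4 * INR k + 1))) by (field; lra).
      apply div_le; lra. }
    nra.
Qed.

Lemma lim_rat (c : R) (x : nat -> R) : 1 <= c -> (forall k, 2 * INR k <= x k) ->
  is_lim_seq (fun k => (x k + 1) / (x k + c)) 1.
Proof.
  intros Hc Hx. apply lim_bound with c. intro k.
  assert (Hk := pos_INR k). specialize (Hx k).
  rewrite Rabs_left1.
  - replace (- ((x k + 1) / (x k + c) - 1)) with ((c - 1) / (x k + c)) by (field; lra).
    unfold Rdiv. apply Rmult_le_compat; [lra| left; apply Rinv_0_lt_compat; lra | lra |].
    apply Rinv_le_contravar; lra.
  - assert ((x k + 1) / (x k + c) <= 1) by (apply div_le; lra). lra.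
Qed.

Lemma lim_q : is_lim_seq (fun k => w (2*k) / w k) (sqrt 2 / 2).
Proof. apply lim_bound with 1. apply q_bound. Qed.

Lemma lim_shift (j : nat) : is_lim_seq (fun k => w (k + j) / w k) 1.
Proof.
  induction j as [|j IH].
  - apply is_lim_seq_ext with (fun _ => 1). intro k. rewrite Nat.add_0_r.
    assert (H := w_pos k). field; lra. apply is_lim_seq_const.
  - apply is_lim_seq_ext with (fun k => w (k + j) / w k * ((2 * INR (k + j) + 1) / (2 * INR (k+j) + 2))).
    + intro k. replace (k + S j)%nat with (S (k + j)) by lia. rewrite w_S.
      assert (H := w_pos k). assert (H2 := pos_INR (k+j)). field; lra.
    + replace (Finite 1) with (Finite (1 * 1)) by (f_equal; ring).
      apply is_lim_seq_mult'; [exact IH|].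
      apply lim_rat; [lra|]. intro k. rewrite plus_INR. assert (H := pos_INR j). lra.
Qed.

Lemma lim_Q (m : nat) : is_lim_seq (fun k => w (2*k+1) / w (k + m + 1)) (sqrt 2 / 2).
Proof.
  apply is_lim_seq_ext with
    (fun k => ((2 * INR (2*k) + 1) / (2 * INR (2*k) + 2)) * (w (2*k) / w k) / (w (k + (m+1)) / w k)).
  - intro k. replace (2*k+1)%nat with (S (2*k)) by lia. rewrite w_S.
    replace (k + (m+1))%nat with (k + m + 1)%nat by lia.
    assert (H := w_pos k). assert (H1 := w_pos (2*k)). assert (H3 := w_pos (k+m+1)).
    assert (H2 := pos_INR (2*k)). field; lra.
  - replace (sqrt 2 / 2) with (1 * (sqrt 2 / 2) / 1) by field.
    apply is_lim_seq_div'; [apply is_lim_seq_mult'|apply lim_shift|lra].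
    + apply lim_rat; [lra|]. intro k. rewrite mult_INR. simpl (INR 2). assert (H := pos_INR k). lra.
    + apply lim_q.
Qed.

Lemma series_comb (a b : nat -> R) (la lt c : R) :
  is_series a la -> is_series (fun k => a k - c * b k) lt -> c <> 0 -> is_series b ((la - lt) / c).
Proof.
  intros Ha Ht Hc.
  assert (H := is_series_minus _ _ _ _ Ha Ht).
  apply (is_series_scal_r (/ c)) in H.
  unfold Rdiv.
  replace ((la - lt) * / c) with (plus la (opp lt) * / c) by reflexivity.
  refine (is_series_ext _ _ _ _ H).
  intro k; simpl. change (plus (a k) (opp (a k - c * b k))) with (a k + - (a k - c * b k)).
  field; assumption.
Qed.

Definition v (m k : nat) : R :=
  w (2*k+1) / (4 * (INR k + 1) * (2 * INR k + 2 * INR m + 3) * w (k + m + 1)).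

Lemma v_S (m k : nat) : v m (S k) = v m k *
  ((4 * INR k + 3) * (4 * INR k + 5) * (INR k + 1) * (2 * INR k + 2 * INR m + 4) /
   ((4 * INR k + 4) * (4 * INR k + 6) * (INR k + 2) * (2 * INR k + 2 * INR m + 5))).
Proof.
  unfold v.
  replace (2 * S k + 1)%nat with (S (S (2*k+1))) by lia.
  replace (S k + m + 1)%nat with (S (k + m + 1)) by lia.
  rewrite !w_S. rewrite !S_INR, !plus_INR, mult_INR. simpl (INR 2). simpl (INR 1).
  assert (H := w_pos (2*k+1)). assert (H1 := w_pos (k+m+1)).
  assert (H2 := pos_INR k). assert (H3 := pos_INR m).
  field. repeat split; lra.
Qed.

Lemma v_m (m k : nat) : v (S m) k = v m k * ((2 * INR k + 2 * INR m + 4) / (2 * INR k + 2 * INR m + 5)).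
Proof.
  unfold v.
  replace (k + S m + 1)%nat with (S (k + m + 1)) by lia.
  rewrite !w_S. rewrite !S_INR, !plus_INR. simpl (INR 1).
  assert (H := w_pos (2*k+1)). assert (H1 := w_pos (k+m+1)).
  assert (H2 := pos_INR k). assert (H3 := pos_INR m).
  field. repeat split; lra.
Qed.

Definition Hb (k : nat) : R := - (4/3) * (2 * INR k + 1) * (2 * INR k + 3) * v 0 k.

Lemma base_tele (k : nat) : v 0 k = Hb k - Hb (S k).
Proof.
  unfold Hb. rewrite v_S, S_INR. simpl (INR 0).
  assert (H2 := pos_INR k). field. lra.
Qed.

Definition bm (m : nat) : R := (4 * INR m + 5) * (4 * INR m + 7) / (8 * (INR m + 1) * (2 * INR m + 3)).
Definition gm (m k : nat) : R := (INR k + 1) * (2 * INR k + 1) / ((INR m + 1) * (2 * INR m + 3)) * v m k.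

Lemma step_tele (m k : nat) : v m k - bm m * v (S m) k = gm m k - gm m (S k).
Proof.
  unfold gm, bm. rewrite v_S, v_m, S_INR.
  assert (H2 := pos_INR k). assert (H3 := pos_INR m). field. repeat split; lra.
Qed.

Lemma lim_Hb : is_lim_seq Hb (- (2/3) * (1 * (sqrt 2 / 2))).
Proof.
  apply is_lim_seq_ext with (fun k => - (2/3) * (((2 * INR k + 1) / (2 * INR k + 2)) * (w (2*k+1) / w (k + 0 + 1)))).
  - intro k. unfold Hb, v. assert (H := w_pos (2*k+1)). assert (H1 := w_pos (k+0+1)).
    assert (H2 := pos_INR k). simpl (INR 0). field. repeat split; lra.
  - apply (is_lim_seq_scal_l _ (-(2/3)) (1 * (sqrt 2 / 2))).
    apply is_lim_seq_mult'; [|apply lim_Q].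
    apply lim_rat; [lra|]. intro k; lra.
Qed.

Lemma lim_gm (m : nat) : is_lim_seq (gm m) (/ (4 * (INR m + 1) * (2 * INR m + 3)) * (1 * (sqrt 2 / 2))).
Proof.
  apply is_lim_seq_ext with (fun k => / (4 * (INR m + 1) * (2 * INR m + 3)) *
     (((2 * INR k + 1) / (2 * INR k + (2 * INR m + 3))) * (w (2*k+1) / w (k + m + 1)))).
  - intro k. unfold gm, v. assert (H := w_pos (2*k+1)). assert (H1 := w_pos (k+m+1)).
    assert (H2 := pos_INR k). assert (H3 := pos_INR m). field. repeat split; lra.
  - apply (is_lim_seq_scal_l _ _ (1 * (sqrt 2 / 2))).
    apply is_lim_seq_mult'; [|apply lim_Q].
    apply lim_rat; [assert (H3 := pos_INR m); lra|]. intro k; lra.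
Qed.

Definition V (m : nat) : R :=
  / ((2 * INR m + 1) * w m) - 3 / (8 * (INR m + 1) * w (2*m+2)) *
    (4/3 - sqrt 2 * sum_f_R0 (fun k => w (2*k) / (6 * INR k + 3)) m).

Lemma w_1 : w 1 = 1/2.
Proof. rewrite w_S, w_0. simpl. field. Qed.

Lemma main_v (m : nat) : is_series (v m) (V m).
Proof.
  induction m as [|m IH].
  - assert (T := telescope _ _ _ base_tele lim_Hb).
    replace (V 0) with (Hb 0 - - (2/3) * (1 * (sqrt 2 / 2))); [exact T|].
    unfold V, Hb, v. simpl (2*0+1)%nat. simpl (0+0+1)%nat. simpl (2*0+2)%nat.
    simpl sum_f_R0. simpl (2*0)%nat.
    rewrite (w_S 1), w_1, w_0. simpl INR. field.
  - assert (T := telescope _ _ _ (step_tele m) (lim_gm m)).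
    assert (Hb0 : bm m <> 0).
    { unfold bm. assert (H3 := pos_INR m). apply Rgt_not_eq, Rlt_gt, Rdiv_lt_0_compat; nra. }
    assert (C := series_comb _ _ _ _ _ IH T Hb0).
    replace (V (S m)) with ((V m - (gm m 0 - / (4 * (INR m + 1) * (2 * INR m + 3)) * (1 * (sqrt 2 / 2)))) / bm m);
      [exact C|].
    unfold V, gm, bm, v. rewrite tech5.
    replace (2 * S m + 2)%nat with (S (S (2*m+2))) by lia.
    replace (2 * S m)%nat with (2*m+2)%nat by lia.
    replace (0 + m + 1)%nat with (S m) by lia.
    simpl (2*0+1)%nat. rewrite w_1.
    rewrite !w_S. rewrite !S_INR, !plus_INR, mult_INR. simpl (INR 2). simpl (INR 1). simpl (INR 0).
    set (s := sum_f_R0 _ m).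
    assert (H := w_pos m). assert (H1 := w_pos (2*m+2)). assert (H3 := pos_INR m).
    field. repeat split; lra.
Qed.

Lemma binom_w (n : nat) : binomR (2*n) n = 4 ^ n * w n.
Proof. unfold w. assert (4 ^ n <> 0) by (apply pow_nonzero; lra). field. assumption. Qed.

Lemma pow16 (n : nat) : 16 ^ n = 4 ^ n * 4 ^ n.
Proof. rewrite <- Rpow_mult_distr. f_equal. lra. Qed.

Theorem theorem4p0p2 (r : nat) (hr : (1 <= r)%nat) :
  is_series (fun k : nat => term r (S k))
    (/ ((2 * INR r - 1) * binomR (2 * r - 2) (r - 1)) - / 2 ^ (2 * r - 2) * I_r r).
Proof.
  destruct r as [|m]; [lia|]. clear hr.
  assert (P : 0 < 4 ^ m) by (apply pow_lt; lra).
  replace (/ ((2 * INR (S m) - 1) * binomR (2 * S m - 2) (S m - 1)) - / 2 ^ (2 * S m - 2) * I_r (S m))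
    with (V m * / 4 ^ m).
  2:{
    unfold V, I_r.
    replace (2 * S m - 2)%nat with (2 * m)%nat by lia.
    replace (S m - 1)%nat with m by lia.
    replace (4 * S m)%nat with (2 * (2*m+2))%nat by lia.
    replace (2 * S m)%nat with (2*m+2)%nat by lia.
    rewrite !binom_w, pow_mult.
    rewrite (sum_eq (fun k => binomR (4 * k) (2 * k) / ((6 * INR k + 3) * 16 ^ k)) (fun k => w (2*k) / (6 * INR k + 3))).
    2:{ intros i _. replace (4 * i)%nat with (2 * (2 * i))%nat by lia.
        rewrite binom_w, pow_mult. replace (4 ^ 2) with 16 by ring.
        assert (H := pow_lt 16 i). assert (H2 := pos_INR i). field. lra. }
    replace (2*m+2)%nat with (m + m + 2)%nat by lia.
    rewrite !pow_add, pow16. replace (m + m + 2)%nat with (2*m+2)%nat by lia.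
    set (s := sum_f_R0 _ m).
    assert (H := w_pos m). assert (H1 := w_pos (2*m+2)). assert (H3 := pos_INR m).
    rewrite S_INR. simpl (2 ^ 2).
    replace (2 * (2 * 1)) with 4 by ring. field. repeat split; lra. }
  apply is_series_ext with (fun k => v m k * / 4 ^ m).
  2: apply is_series_scal_r, main_v.
  intro k. change (v m k * / 4 ^ m = term (S m) (S k)). unfold term, v.
  replace (4 * S k - 2)%nat with (2 * (2*k+1))%nat by lia.
  replace (2 * S k - 1)%nat with (2*k+1)%nat by lia.
  replace (2 * S k + 2 * S m - 2)%nat with (2 * (k+m+1))%nat by lia.
  replace (S k + S m - 1)%nat with (k+m+1)%nat by lia.
  rewrite !binom_w.
  replace (2*k+1)%nat with (k+k+1)%nat by lia.
  replace (k+m+1)%nat with (k+m+1)%nat by lia.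
  rewrite !pow_add. simpl (4 ^ 1). simpl (4 ^ S k).
  replace (k+k+1)%nat with (2*k+1)%nat by lia.
  assert (H := w_pos (2*k+1)). assert (H1 := w_pos (k+m+1)).
  assert (H2 := pos_INR k). assert (H3 := pos_INR m). assert (P2 : 0 < 4 ^ k) by (apply pow_lt; lra).
  rewrite !S_INR. field. repeat split; lra.
Qed.
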